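(* Let $S$ be a tree and let $v$ be a vertex of $S$ of degree two, with neighbours $u,w$. Let $T$ be the tree obtained from $S$ by deleting $v$ and adding a new edge joining $u$ and $w$. If $T$ is upright, then $S$ is upright.
   Context: For a graph $G$ and $X\subseteq V(G)$, $D_G(X)$ is the set of edges with one end in $X$ and the other in $V(G)\setminus X$; for $A,B\subseteq V(G)$, $D_G(A,B)$ is the set of edges with one end in $A\setminus B$ and the other in $B\setminus A$. A bias in a graph $S$ is a set $\mathcal B$ of subsets of $V(S)$ such that: every $A\in\mathcal B$ satisfies $A\ne\emptyset, V(S)$; if $A,B\in\mathcal B$ and $D_S(A,B)=\emptyset$ then both $A\cap B$ and $A\cup B$ lie in $\mathcal B\cup\{\emptyset,V(S)\}$; and if $A,B\in\mathcal B$ and $|D_S(A,B)|=1$ then at least one of $A\cap B, A\cup B$ lies in $\mathcal B\cup\{\emptyset,V(S)\}$. A directing of $S$ assigns to each edge one of its ends as head, giving a digraph $S'$; $D^+_{S'}(X)$ is the set of edges with tail in $X$ and head outside $X$, and $D^-_{S'}(X)=D^+_{S'}(V(S)\setminus X)$. A forest $S$ is upright if for every bias $\mathcal B$ in $S$ with $|D_S(X)|\ge 2$ for all $X\in\mathcal B$, there is a directing of $S$, forming a digraph $S'$, such that $D^+_{S'}(X)\ne\emptyset$ and $D^-_{S'}(X)\neq\emptyset$ for all $X\in\mathcal B$. *)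

(* Defs.v *)
From mathcomp Require Import all_boot.
Set Implicit Arguments. Unset Strict Implicit. Unset Printing Implicit Defensive.

Section Graphs.
Variable V : finType.
Implicit Types (e d : rel V) (X A B : {set V}).

Definition simple_graph e := symmetric e /\ irreflexive e.

Definition has_cycle e := exists s : seq V, [/\ 2 < size s, uniq s & cycle e s].

Definition forest e := simple_graph e /\ ~ has_cycle e.

Definition connected_graph e := forall x y : V, connect e x y.

Definition tree e := forest e /\ connected_graph e.

(* |D_S(X)|: each edge with one end in X, other outside, counted once
   (as the ordered pair (end in X, end outside X)) *)
Definition cut_size e X :=
  #|[set p : V * V | [&& e p.1 p.2, p.1 \in X & p.2 \notin X]]|.

Definition cut2_size e A B :=
  #|[set p : V * V | [&& e p.1 p.2, p.1 \in A :\: B & p.2 \in B :\: A]]|.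

Definition in_bias_ext (Bs : {set {set V}}) X :=
  (X \in Bs) || (X == set0) || (X == setT).

Definition bias e (Bs : {set {set V}}) :=
  [/\ forall A, A \in Bs -> A != set0 /\ A != setT,
      forall A B, A \in Bs -> B \in Bs -> cut2_size e A B = 0 ->
        in_bias_ext Bs (A :&: B) /\ in_bias_ext Bs (A :|: B)
    & forall A B, A \in Bs -> B \in Bs -> cut2_size e A B = 1 ->
        in_bias_ext Bs (A :&: B) \/ in_bias_ext Bs (A :|: B)].

(* a directing of e: d x y means the edge xy has tail x and head y;
   every edge gets exactly one of its ends as head *)
Definition directing e d :=
  forall x y : V, (d x y -> e x y) /\ (e x y -> d x y (+) d y x).

Definition out_nonempty d X := exists x y, [/\ x \in X, y \notin X & d x y].
Definition in_nonempty d X := exists x y, [/\ x \notin X, y \in X & d x y].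

Definition upright e :=
  forall Bs : {set {set V}}, bias e Bs ->
    (forall X, X \in Bs -> 2 <= cut_size e X) ->
    exists d, directing e d /\
      forall X, X \in Bs -> out_nonempty d X /\ in_nonempty d X.
End Graphs.

Definition suppress (V : finType) (e : rel V) (v u w : V) : rel {x : V | x != v} :=
  fun x y => [|| e (val x) (val y),
                 (val x == u) && (val y == w) | (val x == w) && (val y == u)].
Arguments suppress {V} e v u w.

(* Main.v *)
Require Import Defs.
From mathcomp Require Import all_boot.
Set Implicit Arguments. Unset Strict Implicit. Unset Printing Implicit Defensive.

Lemma cut_cut2 (V : finType) (e : rel V) X : cut_size e X = cut2_size e X (~: X).
Proof.
rewrite /cut_size /cut2_size; apply: eq_card => p; rewrite !inE.
by case: (p.1 \in X); case: (p.2 \in X); rewrite ?andbF ?andbT.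
Qed.

Definition sepb3 (a b c : bool) := (a == c) && (b != a).

Section Main.
Variables (V : finType) (e : rel V) (v u w : V).
Hypotheses (Ht : tree e) (Huw : u != w) (Hv : [set x | e v x] = [set u; w]).

Local Notation W := {x : V | x != v}.

Lemma esymm : symmetric e. Proof. by case: Ht => [[[]]]. Qed.
Lemma eirr : irreflexive e. Proof. by case: Ht => [[[]]]. Qed.
Lemma evx x : e v x = (x == u) || (x == w).
Proof. by move/setP: Hv => /(_ x); rewrite !inE. Qed.
Lemma exv x : e x v = (x == u) || (x == w).
Proof. by rewrite esymm evx. Qed.
Lemma uv : u != v.
Proof. by apply/eqP => E; have := eirr v; rewrite -{2}E evx eqxx. Qed.
Lemma wv : w != v.
Proof. by apply/eqP => E; have := eirr v; rewrite -{2}E evx eqxx orbT. Qed.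

Lemma euw : e u w = false.
Proof.
apply/negP => H; case: Ht => [[_ Hc] _]; apply: Hc; exists [:: u; v; w]; split => //.
  by rewrite /= !inE negb_or uv Huw eq_sym wv.
by rewrite /= esymm evx eqxx /= evx eqxx orbT esymm H.
Qed.
Lemma ewu : e w u = false. Proof. by rewrite esymm euw. Qed.

Definition Q2 (A B : {set V}) (p : V * V) := (p.1 \in A :\: B) && (p.2 \in B :\: A).
Definition s4 := [:: (v,u); (u,v); (v,w); (w,v)].
Definition s2 := [:: (u,w); (w,u)].
Definition K (Q : pred (V * V)) := [set p : V * V | [&& p.1 != v, p.2 != v, e p.1 p.2 & Q p]].

Lemma card_filt (s : seq (V * V)) (Q : pred (V * V)) : uniq s ->
  #|[set p | p \in filter Q s]| = count Q s.
Proof.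
move=> us; rewrite cardsE -size_filter; apply/card_uniqP; exact: filter_uniq.
Qed.

Lemma cutS_gen (Q : pred (V * V)) :
  #|[set p | e p.1 p.2 && Q p]| = #|K Q| + count Q s4.
Proof.
rewrite -(cardsID [set p : V * V | (p.1 != v) && (p.2 != v)]); congr (_ + _).
  by apply: eq_card => -[a b]; rewrite !inE /=; case: (a != v); case: (b != v);
     case: (e a b); case: (Q _).
rewrite -card_filt; last first.
  rewrite /s4 /= !inE !xpair_eqE !eqxx /= !negb_or.
  by rewrite !(eq_sym v) (negbTE uv) (negbTE wv) Huw.
apply: eq_card => -[a b]; rewrite !inE mem_filter /s4 !inE !xpair_eqE /=.
case: (eqVneq a v) => [->|av].
  rewrite evx !(eq_sym v) (negbTE uv) (negbTE wv) /= ?andbF /= ?orbF.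
  by case: (b == u); case: (b == w); case: (Q _).
case: (eqVneq b v) => [->|bv].
  rewrite exv /= ?andbT ?orbF ?andbF ?orbF.
  by case: (a == u); case: (a == w); case: (Q _).
by rewrite /= !andbF.
Qed.

Lemma cutS A B : cut2_size e A B = #|K (Q2 A B)| + count (Q2 A B) s4.
Proof. exact: cutS_gen. Qed.

Definition proj (X : {set V}) : {set W} := [set x : W | val x \in X].

Lemma cutT A B : cut2_size (suppress e v u w) (proj A) (proj B)
   = #|K (Q2 A B)| + count (Q2 A B) s2.
Proof.
pose f := fun p : W * W => (val p.1, val p.2).
have finj : injective f.
  by move=> [x1 y1] [x2 y2] [/val_inj -> /val_inj ->].
rewrite /cut2_size -(card_imset _ finj).
set S := [set f x | x in _].
have -> : S = [set p : V * V | [&& p.1 != v, p.2 != v,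
    e p.1 p.2 || ((p == (u, w)) || (p == (w, u))) & Q2 A B p]].
  apply/setP => -[a b]; rewrite inE; apply/imsetP/idP.
    move=> [[x y]]; rewrite !inE /f /= => Hxy [-> ->].
    rewrite (valP x) (valP y) /= !xpair_eqE /Q2 !inE.
    by move: Hxy; rewrite /suppress.
  move/and4P => [av bv H1 H2].
  exists (exist _ a av, exist _ b bv) => //.
  by rewrite !inE /suppress /=; move: H1 H2; rewrite !xpair_eqE /Q2 !inE /= => -> ->.
rewrite -(cardsID [set p : V * V | e p.1 p.2]); congr (_ + _).
  by apply: eq_card => -[a b]; rewrite !inE /=; case: (e a b); rewrite /= ?andbT ?andbF.
rewrite -card_filt; last by rewrite /s2 /= !inE !xpair_eqE (negbTE Huw).
apply: eq_card => -[a b]; rewrite !inE mem_filter /s2 !inE !xpair_eqE /=.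
case: (eqVneq a u) => [->|au] /=.
  case: (eqVneq b w) => [->|bw] /=; first by rewrite euw uv wv /= andbC.
  by rewrite (negbTE Huw) /= ?andbF; case: (e u b); rewrite ?andbF.
case: (eqVneq a w) => [->|aw] /=.
  case: (eqVneq b u) => [->|bu] /=; first by rewrite ewu uv wv /= andbC.
  by rewrite ?andbF; case: (e w b); rewrite ?andbF.
by rewrite ?andbF; case: (e a b); rewrite ?andbF.
Qed.

Definition sepb (X : {set V}) := sepb3 (u \in X) (v \in X) (w \in X).

Lemma Fbool A B : ~~ sepb A -> ~~ sepb B ->
 [/\ count (Q2 A B) s4 <= count (Q2 A B) s2,
     sepb (A :&: B) -> count (Q2 A B) s4 < count (Q2 A B) s2,
     sepb (A :|: B) -> count (Q2 A B) s4 < count (Q2 A B) s2 &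
     ~~ (sepb (A :&: B) && sepb (A :|: B))].
Proof.
rewrite /sepb /sepb3 /Q2 /s4 /s2 /= !inE.
move: (u \in A) (v \in A) (w \in A) (u \in B) (v \in B) (w \in B).
by do 6! case.
Qed.

Lemma sepbC X : sepb (~: X) = sepb X.
Proof. by rewrite /sepb /sepb3 !inE; case: (u \in X); case: (v \in X); case: (w \in X). Qed.

Lemma projI A B : proj (A :&: B) = proj A :&: proj B.
Proof. by apply/setP => x; rewrite !inE. Qed.
Lemma projU A B : proj (A :|: B) = proj A :|: proj B.
Proof. by apply/setP => x; rewrite !inE. Qed.
Lemma projC A : proj (~: A) = ~: proj A.
Proof. by apply/setP => x; rewrite !inE. Qed.
Lemma proj0 : proj set0 = set0.
Proof. by apply/setP => x; rewrite !inE. Qed.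
Lemma projT : proj setT = setT.
Proof. by apply/setP => x; rewrite !inE. Qed.

Lemma inOut (d : rel V) X : out_nonempty d (~: X) -> in_nonempty d X.
Proof. by move=> [x [y [hx hy hd]]]; exists x, y; rewrite !inE negbK in hx hy. Qed.

Lemma main_sec : upright (suppress e v u w) -> upright e.
Proof.
move=> HT Bs [Hb1 Hb2 Hb3] Hcut.
pose Bs' := [set proj X | X in [set X in Bs | ~~ sepb X]].
have memBs' X : X \in Bs -> ~~ sepb X -> proj X \in Bs'.
  by move=> XB Xs; apply/imsetP; exists X; rewrite // inE XB.
have memBs'P Y : Y \in Bs' -> exists2 X, (X \in Bs) && ~~ sepb X & Y = proj X.
  by case/imsetP => X; rewrite inE => H ->; exists X.
have transfer C : in_bias_ext Bs C -> ~~ sepb C -> in_bias_ext Bs' (proj C).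
  rewrite /in_bias_ext => /orP [/orP [CB|/eqP ->]|/eqP ->] Cs.
  - by rewrite memBs'.
  - by rewrite proj0 eqxx orbT.
  - by rewrite projT eqxx orbT.
have Hbias : bias (suppress e v u w) Bs'.
  split.
  - move=> Y /memBs'P [X /andP [XB Xs] ->]; have [X0 XT] := Hb1 X XB.
    split.
      apply: contra Xs => /eqP P0.
      have Hn y (hy : y != v) : (y \in X) = false.
        apply/negbTE/negP => yX.
        have : (exist _ y hy : W) \in proj X by rewrite inE.
        by rewrite P0 inE.
      case/set0Pn: X0 => x xX.
      have xv : x = v by apply/eqP; apply: contraLR xX => /Hn ->.
      by rewrite /sepb /sepb3 (Hn _ uv) (Hn _ wv) -xv xX.
    apply: contra Xs => /eqP PT.
    have Hn y (hy : y != v) : (y \in X) = true.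
      have : (exist _ y hy : W) \in proj X by rewrite PT inE.
      by rewrite inE.
    have vX : v \notin X.
      apply: contra XT => vX; apply/eqP/setP => y; rewrite inE.
      by case: (eqVneq y v) => [->|yv] //; rewrite Hn.
    by rewrite /sepb /sepb3 (Hn _ uv) (Hn _ wv) (negbTE vX).
  - move=> A' B' /memBs'P [A /andP [AB As] ->] /memBs'P [B /andP [BB Bs_] ->].
    rewrite cutT => H0.
    have [F1 F2 F3 F4] := Fbool As Bs_.
    have cS0 : cut2_size e A B = 0.
      by apply/eqP; rewrite -leqn0 cutS -H0 leq_add2l.
    have [I U] := Hb2 A B AB BB cS0.
    have cT0 : count (Q2 A B) s2 = 0 by move/eqP: H0; rewrite addn_eq0 => /andP [_ /eqP].
    rewrite -projI -projU; split; apply: transfer => //; apply/negP.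
      by move/F2; rewrite cT0.
    by move/F3; rewrite cT0.
  - move=> A' B' /memBs'P [A /andP [AB As] ->] /memBs'P [B /andP [BB Bs_] ->].
    rewrite cutT => H1.
    have [F1 F2 F3 F4] := Fbool As Bs_.
    rewrite -projI -projU.
    have : cut2_size e A B <= 1 by rewrite cutS -H1 leq_add2l.
    rewrite leq_eqVlt ltnS leqn0 => /orP [/eqP cS1 | /eqP cS0].
      have eqc : count (Q2 A B) s4 = count (Q2 A B) s2.
        by apply/eqP; rewrite -(eqn_add2l #|K (Q2 A B)|) -cutS cS1 H1.
      case: (Hb3 A B AB BB cS1) => H; [left|right]; apply: transfer => //; apply/negP.
        by move/F2; rewrite eqc ltnn.
      by move/F3; rewrite eqc ltnn.
    have [I U] := Hb2 A B AB BB cS0.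
    case: (boolP (sepb (A :&: B))) => sI.
      by right; apply: transfer => //; apply: contra F4 => ->; rewrite sI.
    by left; apply: transfer.
have Hcut' Y : Y \in Bs' -> 2 <= cut_size (suppress e v u w) Y.
  move=> /memBs'P [X /andP [XB Xs] ->].
  rewrite cut_cut2 -projC cutT.
  have [F1 _ _ _] := Fbool Xs (negbT (etrans (sepbC X) (negbTE Xs))).
  apply: leq_trans (Hcut X XB) _; rewrite cut_cut2 cutS leq_add2l; exact: F1.
have [d' [Hd' Hio]] := HT Bs' Hbias Hcut'.
pose u' : W := exist _ u uv.
pose w' : W := exist _ w wv.
pose uw := d' u' w'.
pose lift (x : V) : W := insubd u' x.
pose d : rel V := fun x y => e x y &&
  (if (x != v) && (y != v) then d' (lift x) (lift y)
   else if x == v then (if uw then y == w else y == u)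
   else (if uw then x == u else x == w)).
have Tuw : suppress e v u w u' w' by rewrite /suppress /= !eqxx orbT.
have xuw : uw (+) d' w' u' by have [_ /(_ Tuw)] := Hd' u' w'.
have vu : (v == u) = false by rewrite eq_sym (negbTE uv).
have vw : (v == w) = false by rewrite eq_sym (negbTE wv).
have wu : (w == u) = false by rewrite eq_sym (negbTE Huw).
have dvw : uw -> d v w by move=> H; rewrite /d evx eqxx orbT /= eqxx H.
have duv : uw -> d u v by move=> H; rewrite /d exv !eqxx /= (negbTE uv) andbF H.
have dvu : ~~ uw -> d v u by move=> H; rewrite /d evx !eqxx /= (negbTE H).
have dwv : ~~ uw -> d w v by move=> H; rewrite /d exv !eqxx orbT /= (negbTE wv) andbF (negbTE H).
have dval (x' y' : W) : e (val x') (val y') -> d (val x') (val y') = d' x' y'.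
  by move=> H; rewrite /d H (valP x') (valP y') /= /lift !valKd.
have Hdir : directing e d.
  move=> x y; split; first by case/andP.
  move=> exy.
  case: (eqVneq x v) => [xv|xv].
    subst x; move: exy; rewrite evx => /orP [] /eqP ->;
    by rewrite /d evx exv !eqxx ?orbT /= ?vu ?vw ?wu ?(negbTE uv) ?(negbTE wv) ?(negbTE Huw) ?andbF /=; case: (uw).
  case: (eqVneq y v) => [yv|yv].
    subst y; move: exy; rewrite exv => /orP [] /eqP ->;
    by rewrite /d evx exv !eqxx ?orbT /= ?vu ?vw ?wu ?(negbTE uv) ?(negbTE wv) ?(negbTE Huw) ?andbF /=; case: (uw).
  have Tl : suppress e v u w (lift x) (lift y).
    by rewrite /suppress /lift !insubdK // exy.
  have [_ /(_ Tl)] := Hd' (lift x) (lift y).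
  by rewrite /d exy esymm exy xv yv.
have outL (X : {set V}) (x' y' : W) : d' x' y' -> val x' \in X -> val y' \notin X -> out_nonempty d X.
  move=> hd hx hy.
  have [/(_ hd) + _] := Hd' x' y'.
  rewrite /suppress => /orP [exy | /orP [/andP [/eqP xu /eqP yw] | /andP [/eqP xw /eqP yu]]].
  - by exists (val x'), (val y'); rewrite dval.
  - have ex : x' = u' by apply: val_inj.
    have ey : y' = w' by apply: val_inj.
    have Huw' : uw by rewrite /uw -ex -ey.
    rewrite xu in hx; rewrite yw in hy.
    case: (boolP (v \in X)) => vX.
      by exists v, w; split => //; apply: dvw.
    by exists u, v; split => //; apply: duv.
  - have ex : x' = w' by apply: val_inj.
    have ey : y' = u' by apply: val_inj.
    have Huw' : ~~ uw by move: xuw; rewrite -ex -ey hd addbT.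
    rewrite xw in hx; rewrite yu in hy.
    case: (boolP (v \in X)) => vX.
      by exists v, u; split => //; apply: dvu.
    by exists w, v; split => //; apply: dwv.
exists d; split => // X XB.
case: (boolP (sepb X)) => [sX | nsX].
  move: sX; rewrite /sepb /sepb3.
  case: (boolP (v \in X)) => vX; case: (boolP (u \in X)) => uX; case: (boolP (w \in X)) => wX //= _.
    case: (boolP uw) => H.
      by split; [exists v, w | exists u, v]; split => //; [apply: dvw | apply: duv].
    by split; [exists v, u | exists w, v]; split => //; [apply: dvu | apply: dwv].
  case: (boolP uw) => H.
    by split; [exists u, v | exists v, w]; split => //; [apply: duv | apply: dvw].
  by split; [exists w, v | exists v, u]; split => //; [apply: dwv | apply: dvu].
have [[x' [y' [hx hy hd]]] [x2 [y2 [hx2 hy2 hd2]]]] := Hio (proj X) (memBs' X XB nsX).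
split.
  by apply: (outL X x' y' hd); move: hx hy; rewrite !inE.
apply: inOut; apply: (outL _ x2 y2 hd2); move: hx2 hy2; rewrite !inE //.
by rewrite negbK.
Qed.
End Main.

Theorem mainTheorem3 (V : finType) (e : rel V) (v u w : V) :
  tree e ->
  u != w ->
  [set x | e v x] = [set u; w] ->
  upright (suppress e v u w) ->
  upright e.
Proof. move=> Ht Huw Hv; exact: main_sec. Qed.
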